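(* Let $A=(S,f_c,f_d)$ be a self-similar cellular automaton and suppose $q\in S$ satisfies $f_c(x,q,z)=f_d(x,q,z)=q$ for all $x,z\in S$. Let $c:\mathbb{Z}\to S$ be an initial configuration with $c(j)=q$ for some $j\in\mathbb{Z}$. Then every evolution $s$ of $A$ from $c$ satisfies $s(j,k)=q$ for all $k\ge 0$, and for every $i<j$ and every $k\ge0$ the value $s(i,k)$ is the same for all evolutions $s$ of $A$ from $c$.
   Context: A self-similar cellular automaton is a triple $A=(S,f_c,f_d)$ with $S$ a finite set of states and $f_c,f_d:S^3\to S$. Cells are indexed by $j\in\mathbb{Z}$; cell $j$ has cycles $[k/2^j,(k+1)/2^j)$, and the $k$-th cycle of cell $j$ is identified with the pair $(j,k)$. The automaton is started at time $0$; the set of cycles is $C=\{(i,k): i\in\mathbb{Z},\ k\in\mathbb{Z}_{\ge 0}\}$. Given an initial configuration $c:\mathbb{Z}\to S$, an evolution of $A$ from $c$ is a map $s:C\to S$ with $s(i,0)=c(i)$ for all $i$ and, for all $(i,k)$ with $k\ge1$, $s(i,k)=f_c\big(s(i-1,\lfloor (k-1)/2\rfloor),s(i,k-1),s(i+1,2k-1)\big)$ if $k$ is even and $s(i,k)=f_d(\text{same arguments})$ if $k$ is odd. *)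

(* Defs.v *)
From HB Require Import structures.
From mathcomp Require Import all_boot all_order all_algebra.
Set Implicit Arguments. Unset Strict Implicit. Unset Printing Implicit Defensive.
Import Order.TTheory GRing.Theory Num.Theory.

Record ssca := SSCA {
  ssca_S : finType;
  ssca_fc : ssca_S -> ssca_S -> ssca_S -> ssca_S;
  ssca_fd : ssca_S -> ssca_S -> ssca_S -> ssca_S }.

Definition is_evolution (A : ssca) (c : int -> ssca_S A)
    (s : int -> nat -> ssca_S A) : Prop :=
  (forall i : int, s i 0%N = c i) /\
  (forall (i : int) (k : nat), (1 <= k)%N ->
     s i k = (if odd k then @ssca_fd A else @ssca_fc A)
               (s (i - 1)%R ((k - 1) %/ 2)%N)
               (s i (k - 1)%N)
               (s (i + 1)%R (2 * k - 1)%N)).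

(* Main.v *)
Require Import Defs.
From HB Require Import structures.
From mathcomp Require Import all_boot all_order all_algebra.
Import Order.TTheory GRing.Theory Num.Theory.

Lemma meas1 (k d : nat) : (0 < k)%N ->
  ((k - 1) %/ 2 * 2 ^ d.+2 < k * 2 ^ d.+1)%N.
Proof.
move=> k0.
apply: (@leq_ltn_trans ((k - 1) * 2 ^ d.+1)).
  rewrite [2 ^ d.+2]expnS mulnA leq_mul2r; apply/orP; right.
  by rewrite leq_divM.
by rewrite ltn_pmul2r ?expn_gt0 // subn1 prednK.
Qed.

Lemma meas2 (k d : nat) : (0 < k)%N ->
  ((k - 1) * 2 ^ d.+1 < k * 2 ^ d.+1)%N.
Proof. by move=> k0; rewrite ltn_pmul2r ?expn_gt0 // subn1 prednK. Qed.

Lemma meas3 (k d : nat) : (0 < k)%N ->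
  ((2 * k - 1) * 2 ^ d < k * 2 ^ d.+1)%N.
Proof.
move=> k0; rewrite expnS mulnA [k * 2]mulnC ltn_pmul2r ?expn_gt0 //.
by rewrite subn1 prednK // (leq_trans k0) // leq_pmull.
Qed.

Theorem mainTheorem3 (A : ssca) (q : ssca_S A)
  (hq : forall x z : ssca_S A, @ssca_fc A x q z = q /\ @ssca_fd A x q z = q)
  (c : int -> ssca_S A) (j : int) (hcj : c j = q) :
  (forall s, is_evolution c s -> forall k : nat, s j k = q) /\
  (forall i : int, (i < j)%R -> forall k : nat,
     forall s1 s2, is_evolution c s1 -> is_evolution c s2 -> s1 i k = s2 i k).
Proof.
have P1 : forall s, is_evolution c s -> forall k : nat, s j k = q.
  move=> s [H0 HS]; elim=> [|k IH]; first by rewrite H0.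
  rewrite HS // subn1 /= IH; case: (odd _); by case: (hq (s (j - 1)%R (k %/ 2)) (s (j + 1)%R (2 * k.+1 - 1))).
split=> //.
move=> i ij k s1 s2 E1 E2.
have key : forall n d k, (k * 2 ^ d.+1 <= n)%N ->
    s1 (j - (Posz d.+1))%R k = s2 (j - (Posz d.+1))%R k.
  elim=> [|n IH] d [|k'] hk.
  - by rewrite E1.1 E2.1.
  - by move: hk; rewrite leqn0 muln_eq0 expn_eq0.
  - by rewrite E1.1 E2.1.
  have k0 : (0 < k'.+1)%N by [].
  rewrite E1.2 // E2.2 //.
  have eL : (j - (Posz d.+1) - 1 = j - (Posz d.+2))%R.
    by rewrite -addrA -opprD -[1%R]/((Posz 1)) -PoszD addn1.
  have L : s1 (j - (Posz d.+1) - 1)%R ((k'.+1 - 1) %/ 2)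
         = s2 (j - (Posz d.+1) - 1)%R ((k'.+1 - 1) %/ 2).
    rewrite eL; apply: IH; rewrite -ltnS; exact: leq_trans (meas1 _ d k0) hk.
  have M : s1 (j - (Posz d.+1))%R (k'.+1 - 1) = s2 (j - (Posz d.+1))%R (k'.+1 - 1).
    apply: IH; rewrite -ltnS; exact: leq_trans (meas2 _ d k0) hk.
  have R : s1 (j - (Posz d.+1) + 1)%R (2 * k'.+1 - 1) = s2 (j - (Posz d.+1) + 1)%R (2 * k'.+1 - 1).
    case: d hk eL L M => [|d] hk _ _ _.
      have -> : (j - (Posz 0.+1) + 1 = j)%R by rewrite subrK.
      by rewrite (P1 _ E1) (P1 _ E2).
    have -> : (j - (Posz d.+2) + 1 = j - (Posz d.+1))%R.
      by rewrite -[1%R]/((Posz 1)) -[d.+2]addn1 PoszD opprD addrA subrK.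
    apply: IH; rewrite -ltnS; exact: leq_trans (meas3 _ d.+1 k0) hk.
  by rewrite L M R.
have [n hn] : exists n : nat, (j - i)%R = (Posz n.+1).
  move: ij; rewrite -subr_gt0; case: (j - i)%R => [[|n]|n] //= _; by exists n.
have -> : i = (j - (Posz n.+1))%R by rewrite -hn opprB addrC subrK.
exact: (key _ n k (leqnn _)).
Qed.
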